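(* Let $D$ be a digraph (finite, without loops, parallel arcs or digons) and let $S(D)$ be a skeleton of $D$ that admits a simple dicycle intersection graph. If $v\in V(S(D))$ satisfies $d^{+}_{D}(v)=d^{+}_{S(D)}(v)$, then $v\in SV(D)$, i.e. $|N^{+2}_D(v)|\ge|N^{+}_D(v)|$.
   Context: All digraphs are finite, with no loops, no parallel arcs and no digons (a digon is a pair of arcs $u\to w$, $w\to u$). For a digraph $H$ and vertex $v$, $N^{+}_H(v)$ is the set of out-neighbours of $v$ in $H$, $d^{+}_H(v)=|N^{+}_H(v)|$, and $N^{+2}_H(v)$ is the set of vertices $w\notin N^{+}_H(v)\cup\{v\}$ such that $u\to w$ is an arc of $H$ for some $u\in N^{+}_H(v)$; $SV(H)$ is the set of $v$ with $|N^{+2}_H(v)|\ge|N^{+}_H(v)|$. An Eulerian digraph is a (weakly) connected digraph with at least one arc in which $d^{+}(x)=d^{-}(x)$ for every vertex. A skeleton of $D$ is a maximal Eulerian subdigraph of $D$. A cycle decomposition of an Eulerian digraph is a set of dicycles whose arc sets partition its arc set; its dicycle intersection graph is the multigraph whose vertices are these dicycles, with one edge between distinct dicycles $C,C'$ for each vertex lying on both. An Eulerian digraph admits a simple dicycle intersection graph if it has a cycle decomposition whose dicycle intersection graph has no parallel edges (any two distinct dicycles share at most one vertex). *)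

(* Defs.v *)
From mathcomp Require Import all_boot.
Set Implicit Arguments. Unset Strict Implicit. Unset Printing Implicit Defensive.

(* A digraph D on the finite vertex type T is an arc relation (V(D) = T). *)
Definition loopless (T : finType) (D : rel T) := forall x, ~~ D x x.
Definition no_digons (T : finType) (D : rel T) := forall x y, D x y -> ~~ D y x.

Definition outN (T : finType) (D : rel T) (v : T) : {set T} := [set w | D v w].
Definition outN2 (T : finType) (D : rel T) (v : T) : {set T} :=
  [set w | (w \notin outN D v) && (w != v) && [exists u in outN D v, D u w]].
Definition SV (T : finType) (D : rel T) : {set T} :=
  [set v | #|outN D v| <= #|outN2 D v|].

Definition subdigraph (T : finType) (D : rel T) (VH : {set T}) (AH : {set T * T}) :=
  forall x y, (x, y) \in AH -> [&& D x y, x \in VH & y \in VH].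

Definition outS (T : finType) (AH : {set T * T}) (v : T) : {set T} :=
  [set w | (v, w) \in AH].
Definition inS (T : finType) (AH : {set T * T}) (v : T) : {set T} :=
  [set u | (u, v) \in AH].

Definition weak_adj (T : finType) (VH : {set T}) (AH : {set T * T}) : rel T :=
  fun a b => [&& a \in VH, b \in VH & ((a, b) \in AH) || ((b, a) \in AH)].
Definition eulerian (T : finType) (VH : {set T}) (AH : {set T * T}) :=
  [/\ forall x y, x \in VH -> y \in VH -> connect (weak_adj VH AH) x y,
      AH != set0 &
      forall x, x \in VH -> #|outS AH x| = #|inS AH x| ].

Definition skeleton (T : finType) (D : rel T) (VS : {set T}) (AS : {set T * T}) :=
  [/\ subdigraph D VS AS, eulerian VS AS &
      forall VH AH, subdigraph D VH AH -> eulerian VH AH ->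
        VS \subset VH -> AS \subset AH -> VH = VS /\ AH = AS ].

(* A dicycle is a duplicate-free vertex sequence of length >= 2, read cyclically. *)
Definition dicycle (T : finType) (c : seq T) := uniq c && (2 <= size c).
Definition cyc_arcs (T : finType) (c : seq T) : {set T * T} :=
  [set p | (p.1 \in c) && (p.2 == next c p.1)].

Definition cycle_decomposition (T : finType) (VH : {set T}) (AH : {set T * T})
    (cs : seq (seq T)) :=
  [/\ forall c, c \in cs -> dicycle c,
      forall c, c \in cs -> cyc_arcs c \subset AH,
      forall i j, i < size cs -> j < size cs -> i != j ->
        [disjoint cyc_arcs (nth [::] cs i) & cyc_arcs (nth [::] cs j)] &
      forall p, p \in AH -> exists2 c, c \in cs & p \in cyc_arcs c ].

Definition admits_simple_dcig (T : finType) (VH : {set T}) (AH : {set T * T}) :=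
  exists cs, cycle_decomposition VH AH cs /\
    forall i j, i < size cs -> j < size cs -> i != j ->
      #|[set x | (x \in nth [::] cs i) && (x \in nth [::] cs j)]| <= 1.

(* Main.v *)
Require Import Defs.
From mathcomp Require Import all_boot.
Set Implicit Arguments. Unset Strict Implicit.

Section Aux.
Variable T : eqType.

Definition yof (P : pred T) (c : seq T) (w : T) :=
  let s := rot (index w c) c in nth w s (find (predC P) s).

Lemma next_uniq_nth (s : seq T) x0 i : uniq s -> i.+1 < size s ->
  next s (nth x0 s i) = nth x0 s i.+1.
Proof.
move=> Hu Hi.
have Hi' : i < size s by rewrite ltnW.
rewrite next_nth mem_nth //.
case: s Hu Hi Hi' => [|y p] // Hu Hi Hi'.
rewrite index_uniq //=.
by apply: set_nth_default.
Qed.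

Lemma yof_spec (P : pred T) c w : uniq c -> w \in c -> P w -> has (predC P) c ->
  exists p, [/\ p \in c, P p, yof P c w = next c p, ~~ P (yof P c w)
    & yof P c w \in c].
Proof.
move=> Hu Hw HP Hh.
set s := rot (index w c) c.
have Hus : uniq s by rewrite rot_uniq.
have Hhs : has (predC P) s by rewrite has_rot.
have Hk : find (predC P) s < size s by rewrite -has_find.
have Hs0 : nth w s 0 = w.
  rewrite /s /rot nth_cat size_drop subn_gt0 index_mem Hw nth_drop addn0.
  by rewrite nth_index.
have Hk0 : 0 < find (predC P) s.
  rewrite lt0n; apply/eqP => E.
  by have := nth_find w Hhs; rewrite E Hs0 /= HP.
exists (nth w s (find (predC P) s).-1); split.
- by rewrite -(mem_rot (index w c)) mem_nth // (leq_ltn_trans (leq_pred _) Hk).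
- have Hlt : (find (predC P) s).-1 < find (predC P) s by rewrite ltn_predL.
  by have := before_find w Hlt => /= /negbFE.
- rewrite /yof -/s -(next_rot (index w c)) // -/s.
  rewrite (@next_uniq_nth s w (find (predC P) s).-1) ?prednK //.
- by have := nth_find w Hhs.
- by have := mem_nth w Hk; rewrite mem_rot.
Qed.
End Aux.

Theorem theorem3p3 (T : finType) (D : rel T)
  (hloop : loopless D) (hdig : no_digons D)
  (VS : {set T}) (AS : {set T * T})
  (hskel : skeleton D VS AS) (hsimple : admits_simple_dcig VS AS)
  (v : T) (hv : v \in VS) (hdeg : #|outN D v| = #|outS AS v|) :
  v \in SV D.
Proof.
case: hskel => hsub _ _.
case: hsimple => cs [[Hdic Hsub Hdisj Hcov] Hsimp].
have HAD : forall x y, (x, y) \in AS -> D x y.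
  by move=> x y /hsub /and3P [].
have Hout : outS AS v = outN D v.
  apply/eqP; rewrite eqEcard hdeg leqnn andbT.
  by apply/subsetP => w; rewrite !inE => /HAD.
pose idx w := find (fun c => (v, w) \in cyc_arcs c) cs.
pose cw w := nth [::] cs (idx w).
pose f w := yof (fun x => x \in outN D v) (cw w) w.
have key : forall w, w \in outN D v ->
  [/\ idx w < size cs, v \in cw w, next (cw w) v = w & f w \in cw w /\
      (f w \in outN2 D v /\ f w != v)].
  move=> w Hw.
  have HwA : (v, w) \in AS by rewrite -Hout inE in Hw.
  have [c Hc Hcc] := Hcov _ HwA.
  have Hhas : has (fun c => (v, w) \in cyc_arcs c) cs.
    by apply/hasP; exists c.
  have Hi : idx w < size cs by rewrite -has_find.
  have Ha : (v, w) \in cyc_arcs (cw w) by exact: (nth_find [::] Hhas).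
  move: (Ha); rewrite inE /= => /andP [Hvc /eqP Hnx].
  have Hcs : cw w \in cs by apply: mem_nth.
  have /andP [Hu _] := Hdic _ Hcs.
  have Hwc : w \in cw w by have := Hvc; rewrite -mem_next -Hnx.
  have Hwo : w \in outN D v by [].
  have Hhp : has (predC (fun x => x \in outN D v)) (cw w).
    apply/hasP; exists v => //=; rewrite inE; exact: hloop.
  have [p [Hpc Hpo Hfp Hfo Hfc]] := yof_spec Hu Hwc Hwo Hhp.
  have Hpf : D p (f w).
    apply: HAD; apply: (subsetP (Hsub _ Hcs)).
    by rewrite inE /= Hpc /f Hfp eqxx.
  have Hvp : D v p.
  move: Hpo => H; have : p \in outN D v by exact: H.
  by rewrite inE.
  have Hfv : f w != v.
    apply/eqP => E; rewrite E in Hpf.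
    by move: (hdig _ _ Hvp); rewrite Hpf.
  split => //; split => //; split => //.
  rewrite inE Hfo Hfv /=; apply/existsP; exists p.
  by rewrite inE Hvp Hpf.
have Hinj : {in outN D v &, injective f}.
  move=> w1 w2 H1 H2 Ef.
  have [Hi1 Hv1 Hn1 [Hf1 [_ Hfv1]]] := key _ H1.
  have [Hi2 Hv2 Hn2 [Hf2 [_ Hfv2]]] := key _ H2.
  case: (eqVneq (idx w1) (idx w2)) => Eij.
    by rewrite -Hn1 -Hn2 /cw Eij.
  have := Hsimp _ _ Hi1 Hi2 Eij.
  have : [set v; f w1] \subset [set x | (x \in nth [::] cs (idx w1)) && (x \in nth [::] cs (idx w2))].
    apply/subsetP => x; rewrite !inE => /orP [] /eqP ->.
      by rewrite Hv1 Hv2.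
    by rewrite Hf1 Ef Hf2.
  move=> /subset_leq_card; rewrite cards2 eq_sym Hfv1 => H3 H4.
  by have := leq_trans H3 H4.
rewrite inE -(card_in_imset Hinj); apply: subset_leq_card.
apply/subsetP => y /imsetP [w Hw ->].
by have [_ _ _ [_ []]] := key _ Hw.
Qed.
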